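(* Let $n\ge 2$ and $x\in\mathbb{R}^{n+1}$ with $|x|<1$, and let $f: S^n \to (0,\infty)$ be $f(y) = |y-x|$. Then, as symmetric 2-tensors on $S^n$, $$\frac{\nabla_{S^n}^2 f}{f} \geq -\frac{1}{4}\, g .$$ Equivalently, for every $y\in S^n$ and every unit vector $\theta\in\mathbb{R}^{n+1}$ with $\langle y,\theta\rangle = 0$, $$\frac{1}{|y-x|^2}\left(\langle x,y\rangle - \frac{\langle x,\theta\rangle^2}{|y-x|^2}\right) \geq -\frac14 .$$
   Context: $S^n\subset\mathbb{R}^{n+1}$ is the unit sphere with its canonical Riemannian metric $g$, and $\nabla_{S^n}^2$ denotes the Riemannian Hessian (with respect to the Levi-Civita connection of $g$) of a function on $S^n$. $\langle\cdot,\cdot\rangle$ and $|\cdot|$ are the Euclidean inner product and norm on $\mathbb{R}^{n+1}$. *)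

(* Defs.v *)
From Stdlib Require Import Reals.
Open Scope R_scope.

(* Vectors of R^{n+1} are represented as functions nat -> R, of which only the
   coordinates 0..n are relevant. *)
Definition vec := nat -> R.

(* Euclidean inner product on R^{n+1}: sum over i = 0..n (sum_f_R0 has n+1 terms). *)
Definition dot (n : nat) (u v : vec) : R := sum_f_R0 (fun i => u i * v i) n.
Definition norm (n : nat) (u : vec) : R := sqrt (dot n u u).
Definition vsub (u v : vec) : vec := fun i => u i - v i.

Definition on_sphere (n : nat) (y : vec) : Prop := norm n y = 1.

(* The unit-speed great circle (geodesic of S^n) through y with unit initial
   velocity theta (theta tangent at y): t |-> cos t * y + sin t * theta. *)
Definition geod (y theta : vec) (t : R) : vec :=
  fun i => cos t * y i + sin t * theta i.

(* Riemannian Hessian quadratic form of F (restricted to S^n) at y in the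
   unit tangent direction theta: (Hess F)_y(theta,theta) = (F o gamma)''(0)
   for the geodesic gamma with gamma(0)=y, gamma'(0)=theta.
   [sphere_hess F y theta l] says this second derivative exists and equals l. *)
Definition sphere_hess (F : vec -> R) (y theta : vec) (l : R) : Prop :=
  exists h' : R -> R,
    (forall t, derivable_pt_lim (fun s => F (geod y theta s)) t (h' t)) /\
    derivable_pt_lim h' 0 l.

(* Main.v *)
From Coquelicot Require Import Coquelicot.
Require Import Defs.
From Stdlib Require Import Reals Lra Psatz FunctionalExtensionality.
Open Scope R_scope.

Lemma expand_sq (n : nat) (u v w : vec) (p q : R) :
  sum_f_R0 (fun i => (p * u i + q * v i - w i) * (p * u i + q * v i - w i)) n =
  p*p*dot n u u + q*q*dot n v v + dot n w w + 2*p*q*dot n u v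
  - 2*p*dot n w u - 2*q*dot n w v.
Proof.
  unfold dot; induction n as [|n IH]; simpl; [ring|]. rewrite IH; ring.
Qed.

Lemma dot_sub (n : nat) (u w : vec) :
  dot n (vsub u w) (vsub u w) = dot n u u + dot n w w - 2 * dot n w u.
Proof.
  unfold dot, vsub; induction n as [|n IH]; simpl; [ring|]. rewrite IH; ring.
Qed.

Lemma geod_sq n y th s : dot n (geod y th s) (geod y th s) =
  cos s*cos s*dot n y y + sin s*sin s*dot n th th + 2*cos s*sin s*dot n y th.
Proof. unfold dot, geod; induction n as [|m IH]; simpl; [ring|]. rewrite IH; ring. Qed.

Lemma geod_lin n x y th s : dot n x (geod y th s) = cos s * dot n x y + sin s * dot n x th.
Proof. unfold dot, geod; induction n as [|m IH]; simpl; [ring|]. rewrite IH; ring. Qed.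

Lemma dot_nonneg (n : nat) (u : vec) : 0 <= dot n u u.
Proof. apply cond_pos_sum; intro i; nra. Qed.

Lemma norm1 n u : norm n u = 1 -> dot n u u = 1.
Proof.
  unfold norm; intro H. rewrite <- (sqrt_sqrt _ (dot_nonneg n u)), H; ring.
Qed.

Theorem mainTheorem2 (n : nat) (hn : (2 <= n)%nat) (x : vec)
  (hx : norm n x < 1) :
  forall y theta : vec,
    on_sphere n y -> norm n theta = 1 -> dot n y theta = 0 ->
    (exists l : R,
        sphere_hess (fun z => norm n (vsub z x)) y theta l /\
        l / norm n (vsub y x) >= - (1 / 4))
    /\
    / (norm n (vsub y x)) ^ 2 *
      (dot n x y - (dot n x theta) ^ 2 / (norm n (vsub y x)) ^ 2) >= - (1 / 4).
Proof.
  intros y th Hy Ht Hyt.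
  apply norm1 in Hy; apply norm1 in Ht.
  set (r := dot n x x). set (a := dot n x y). set (b := dot n x th).
  assert (Hr0 : 0 <= r) by apply dot_nonneg.
  assert (Hr1 : r < 1).
  { unfold norm in hx. fold r in hx.
    destruct (Rlt_or_le r 1) as [H|H]; auto.
    apply sqrt_le_1_alt in H. rewrite sqrt_1 in H. lra. }
  assert (Bes : a*a + b*b <= r).
  { pose proof (cond_pos_sum (fun i => (a * y i + b * th i - x i) * (a * y i + b * th i - x i)) n
      (fun i => Rle_0_sqr _)) as H.
    rewrite expand_sq in H. fold r a b in H. rewrite Hy, Ht, Hyt in H. nra. }
  set (Q := fun s => 1 + r - 2*a*cos s - 2*b*sin s).
  assert (HQ : forall s, 0 < Q s).
  { intro s. unfold Q. pose proof (sin2_cos2 s) as E. unfold Rsqr in E.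
    assert (H1 : (a * cos s + b * sin s)^2 <= r).
    { assert (0 <= (a*sin s - b*cos s)^2) by apply pow2_ge_0.
      assert (Id : (a * cos s + b * sin s)^2 + (a*sin s - b*cos s)^2 = (a*a+b*b)*(sin s * sin s + cos s * cos s)) by ring.
      rewrite E in Id. lra. }
    assert (H2 : (1+r)^2 > 4 * r) by nra.
    nra. }
  assert (Hf : (fun s => norm n (vsub (geod y th s) x)) = (fun s => sqrt (Q s))).
  { apply functional_extensionality; intro s. unfold norm. f_equal.
    rewrite dot_sub.
    rewrite geod_sq, geod_lin, Hy, Ht, Hyt. fold r a b.
    unfold Q. pose proof (sin2_cos2 s) as E2. unfold Rsqr in E2. nra. }
  assert (Hd : norm n (vsub y x) = sqrt (Q 0)).
  { pose proof (f_equal (fun f => f 0) Hf) as E. simpl in E. rewrite <- E.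
    f_equal. apply functional_extensionality; intro i. unfold geod.
    unfold vsub. rewrite cos_0, sin_0. ring. }
  set (d := sqrt (Q 0)).
  assert (Hdd : d * d = Q 0) by (apply sqrt_sqrt; left; apply HQ).
  assert (Hdp : 0 < d) by (apply sqrt_lt_R0; apply HQ).
  assert (Q0 : Q 0 = 1 + r - 2 * a) by (unfold Q; rewrite cos_0, sin_0; ring).
  assert (Key : / d ^ 2 * (a - b ^ 2 / d ^ 2) >= - (1 / 4)).
  { assert (H : 4 * a * (d*d) - 4 * b * b + (d*d)*(d*d) >= 0).
    { rewrite Hdd, Q0. nra. }
    apply Rle_ge. replace (/ d ^ 2 * (a - b ^ 2 / d ^ 2)) with
      ((4 * a * (d*d) - 4 * b * b + (d*d)*(d*d)) / (4 * (d*d*d*d)) - 1/4) by (field; lra).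
    assert (0 <= (4 * a * (d*d) - 4 * b * b + (d*d)*(d*d)) / (4 * (d*d*d*d))).
    { apply Rdiv_le_0_compat; [lra| ]. assert (0 < d*d) by nra. nra. }
    lra. }
  rewrite Hd. fold d. split; [|exact Key].
  exists ((a*d - b*b/d)/(d*d)). split.
  - unfold sphere_hess. rewrite Hf.
    exists (fun t => (a * sin t - b * cos t) / sqrt (Q t)). split.
    + intro t. apply is_derive_Reals. unfold Q.
      auto_derive. { pose proof (HQ t) as H; unfold Q in H; lra. }
      pose proof (HQ t) as H. unfold Q in H.
      assert (sqrt (1 + r - 2 * a * cos t - 2 * b * sin t) <> 0)
        by (apply Rgt_not_eq, sqrt_lt_R0; lra).
      replace (1 + r + - (2 * a * cos t) + - (2 * b * sin t)) with (1 + r - 2*a*cos t - 2*b*sin t) by ring.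
      field; auto.
    + apply is_derive_Reals. unfold Q.
      auto_derive.
      { pose proof (HQ 0) as H; unfold Q in H.
        replace (1 + r + - (2 * a * cos 0) + - (2 * b * sin 0)) with (1 + r - 2*a*cos 0 - 2*b*sin 0) by ring.
        split; [lra|split; auto]. apply Rgt_not_eq, sqrt_lt_R0; lra. }
      replace (1 + r + - (2 * a * cos 0) + - (2 * b * sin 0)) with (Q 0) by (unfold Q; ring).
      fold d. rewrite cos_0, sin_0.
      field. lra.
  - replace ((a * d - b * b / d) / (d * d) / d) with (/ d ^ 2 * (a - b ^ 2 / d ^ 2))
      by (field; lra). exact Key.
Qed.
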